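(* For every triple $m,n,d$ of positive integers with $n\geqslant d$, and every $\eta>0$, there exists an integer $N\geqslant n$ with the following property. If $\mathcal{X}$ is a set with $|\mathcal{X}|=m$ and $\boldsymbol{X}$ is an $\mathcal{X}$-valued, $d$-dimensional random array on a set $I\subseteq\mathbb{N}$ with $|I|\geqslant N$, then there exists $J\subseteq I$ with $|J|=n$ such that the random array $\boldsymbol{X}_J$ is $\eta$-spreadable.
   Context: $\binom{I}{d}$ is the set of $d$-element subsets of $I$. A $d$-dimensional random array on $I$ is a stochastic process $\boldsymbol{X}=\langle X_s:s\in\binom{I}{d}\rangle$; for $J\subseteq I$ with $|J|\geqslant d$, $\boldsymbol{X}_J=\langle X_s:s\in\binom{J}{d}\rangle$. A $d$-dimensional random array $\boldsymbol{Y}$ on a set $L\subseteq\mathbb{N}$ is $\eta$-spreadable if for every pair $J,K$ of finite subsets of $L$ with $|J|=|K|\geqslant d$, the total variation distance between the laws of $\boldsymbol{Y}_J$ and $\boldsymbol{Y}_K$ (identified via the increasing bijection $J\to K$) is at most $\eta$. *)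

(* Defs.v *)
From HB Require Import structures.
From mathcomp Require Import all_boot all_order all_algebra finmap.
From mathcomp Require Import all_classical all_reals all_analysis.
Set Implicit Arguments. Unset Strict Implicit. Unset Printing Implicit Defensive.
Import Order.TTheory GRing.Theory Num.Theory.
Local Open Scope ring_scope.
Local Open Scope classical_set_scope.

Definition dsub (d k : nat) := {S : {set 'I_k} | #|S| == d}.

(* This is the increasing identification of
   the subsets of J with the subsets of {0,...,k-1}. *)
Definition img (k : nat) (J : k.-tuple nat) (S : {set 'I_k}) : {fset nat} :=
  [fset tnth J i | i in S]%fset.

Section Law.
Variables (R : realType) (dT : measure_display) (T : measurableType dT)
  (P : probability T R) (Xty : finType) (X : {fset nat} -> T -> Xty) (d : nat).

(* The value at t of the subarray X_J, re-indexed by d-subsets of 'I_k. *)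
Definition patt (k : nat) (J : k.-tuple nat) (t : T) : {ffun dsub d k -> Xty} :=
  [ffun S => X (img J (val S)) t].

Definition law_ev (k : nat) (J : k.-tuple nat) (A : {set {ffun dsub d k -> Xty}}) : R :=
  fine (P [set t | patt J t \in A]).

Definition dTV (k : nat) (J K : k.-tuple nat) : R :=
  \big[Num.max/0]_(A : {set {ffun dsub d k -> Xty}}) `|law_ev J A - law_ev K A|.

Definition spreadable (eta : R) (L : set nat) : Prop :=
  forall k : nat, (d <= k)%N -> forall J K : k.-tuple nat,
    sorted ltn J -> sorted ltn K ->
    (forall i, L (tnth J i)) -> (forall i, L (tnth K i)) ->
    dTV J K <= eta.
End Law.

(* Main.v *)
Require Import Defs.
From HB Require Import structures.
From mathcomp Require Import all_boot.
Set Implicit Arguments. Unset Strict Implicit. Unset Printing Implicit Defensive.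

Lemma sub_card (T : finType) (W : {set T}) n :
  n <= #|W| -> exists2 H : {set T}, H \subset W & #|H| = n.
Proof.
elim: n => [|n IH] hn; first by exists set0; rewrite ?sub0set ?cards0.
have [H HW Hc] := IH (ltnW hn).
have : ~~ (W \subset H).
  apply/negP => WH; have := subset_leq_card WH; rewrite Hc; move: hn.
  by case: ltnP.
case/subsetPn => x xW xH.
exists (x |: H); first by rewrite subUset sub1set xW HW.
by rewrite cardsU1 xH Hc.
Qed.

Lemma split_ord M (H : {set 'I_M}) a b : #|H| = a + b ->
  exists H1 : {set 'I_M}, exists H2 : {set 'I_M}, [/\ H1 \subset H, H2 \subset H, #|H1| = a, #|H2| = b &
     forall x y, x \in H1 -> y \in H2 -> x < y].
Proof.
elim: b H => [|b IH] H hc.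
  exists H, set0; split => //; rewrite ?sub0set ?cards0 ?hc ?addn0 //.
  by move=> x y _; rewrite inE.
have : (0 < #|H|) by rewrite hc addnS.
rewrite card_gt0; case/set0Pn => x0 x0H.
pose y := [arg max_(i > x0 in H) val i].
have [yH ymax] : y \in H /\ forall z, z \in H -> z <= y.
  by rewrite /y; case: arg_maxnP => // i iH im; split => // z /im.
have := cardsD1 y H; rewrite yH hc addnS add1n => -[] /esym hc'.
have [H1 [H2 [s1 s2 c1 c2 lt12]]] := IH _ hc'.
exists H1, (y |: H2); split.
- by apply: subset_trans s1 (subD1set _ _).
- by rewrite subUset sub1set yH (subset_trans s2 (subD1set _ _)).
- done.
- rewrite cardsU1 c2; have -> // : y \notin H2.
  by apply/negP => /(subsetP s2); rewrite !inE eqxx.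
- move=> x z xH1; rewrite in_setU1 => /predU1P [->|]; last exact: lt12.
  have := subsetP s1 x xH1; rewrite !inE => /andP [xy xH].
  by rewrite ltn_neqAle (ymax _ xH) andbT; apply: contra xy => /eqP/val_inj ->.
Qed.

Definition homog M (C : Type) (col : {set 'I_M} -> C) (r : nat) (H : {set 'I_M}) :=
  forall A B : {set 'I_M}, A \subset H -> B \subset H -> #|A| = r -> #|B| = r -> col A = col B.

Definition ramsey_prop r c n N := forall M (C : finType), #|C| <= c ->
  forall (col : {set 'I_M} -> C) (W : {set 'I_M}), N <= #|W| ->
  exists2 H : {set 'I_M}, H \subset W & (#|H| = n /\ homog col r H).

Definition Good M (C : Type) (col : {set 'I_M} -> C) r (W0 P W : {set 'I_M}) (f : 'I_M -> C) :=
  [/\ forall p w, p \in P -> w \in W -> p < w,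
      forall p (A : {set 'I_M}), p \in P -> A \subset P :|: W -> #|A| = r ->
        (forall a, a \in A -> p < a) -> col (p |: A) = f p,
      P \subset W0 & W \subset W0].

Section Step.
Variables (r c : nat).
Hypothesis IH : forall n, exists N, ramsey_prop r c n N.

Lemma iter t : exists S, forall M (C : finType), #|C| <= c ->
  forall (col : {set 'I_M} -> C) W0 P W f, Good col r W0 P W f -> S <= #|W| ->
  exists P', exists W', exists f', Good col r W0 P' W' f' /\ #|P| + t <= #|P'|.
Proof.
elim: t => [|t [S IHt]].
  by exists 0 => M C _ col W0 P W f G _; exists P, W, f; rewrite addn0.
have [N0 HN0] := IH S.
exists N0.+1 => M C cC col W0 P W f [G1 G2 G3 G4] hW.
have : (0 < #|W|) by apply: leq_trans hW.
rewrite card_gt0; case/set0Pn => x0 x0W.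
pose p := [arg min_(i < x0 in W) val i].
have [pW pmin] : p \in W /\ forall z, z \in W -> p <= z.
  by rewrite /p; case: arg_minnP => // i iH im; split => // z /im.
have hW1 : N0 <= #|W :\ p|.
  by move: hW; rewrite (cardsD1 p W) pW add1n ltnS.
have [H HW1 [Hc Hh]] := HN0 M C cC (fun A => col (p |: A)) (W :\ p) hW1.
pose c0 := col (p |: odflt set0 [pick A : {set 'I_M} | (A \subset H) && (#|A| == r)]).
pose f1 := fun x => if x == p then c0 else f x.
have pP : p \notin P.
  by apply/negP => /G1 /(_ pW); rewrite ltnn.
have HW : H \subset W by apply: subset_trans HW1 (subD1set _ _).
have G : Good col r W0 (p |: P) H f1.
  split.
  - move=> x w; rewrite in_setU1 => /predU1P [->|xP] wH.
      have := subsetP HW1 w wH; rewrite !inE => /andP [wp wW].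
      by rewrite ltn_neqAle pmin // andbT; apply: contra wp => /eqP/val_inj ->.
    by apply: G1 => //; apply: (subsetP HW).
  - move=> x A; rewrite in_setU1 => /predU1P [->|xP] AS Ac Agt.
      have AH : A \subset H.
        apply/subsetP => a aA; have := subsetP AS a aA.
        rewrite !inE => /orP [/orP [/eqP ap|aP]|//].
          by have := Agt a aA; rewrite ap ltnn.
        by have := G1 a p aP pW; have := Agt a aA => h1 h2; have := ltn_trans h1 h2; rewrite ltnn.
      rewrite /f1 eqxx /c0.
      case: pickP => [A0 /andP [A0H /eqP A0c]|/(_ A)]; last by rewrite AH Ac eqxx.
      by apply: (Hh A A0).
    have xp : (x == p) = false by apply/negP => /eqP xp; rewrite -xp xP in pP.
    rewrite /f1 xp; apply: G2 => //.
    apply: subset_trans AS _; rewrite subUset !subUset sub1set !inE pW orbT subsetUl.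
    by rewrite (subset_trans HW) // subsetUr.
  - by rewrite subUset sub1set G3 (subsetP G4).
  - by apply: subset_trans HW G4.
have [P' [W' [f' [G' hc]]]] := IHt M C cC col W0 (p |: P) H f1 G (eq_leq (esym Hc)).
exists P', W', f'; split => //.
by move: hc; rewrite cardsU1 pP add1n addSnnS.
Qed.
End Step.

Lemma ramsey r : forall c n, exists N, ramsey_prop r c n N.
Proof.
elim: r => [|r IHr] c n.
  exists n => M C cC col W hW; have [H HW Hc] := sub_card hW.
  exists H => //; split => // A B _ _ A0 B0.
  by rewrite (cards0_eq A0) (cards0_eq B0).
have [S HS] := iter (IHr c) (c * n).+1.
exists S => M C cC col W hW.
pose f0 := fun _ : 'I_M => col set0.
have G0 : Good col r W set0 W f0.
  by split => //; rewrite ?sub0set // => p ?; rewrite inE.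
have [P' [W' [f' [[G1 G2 G3 G4] hc]]]] := HS M C cC col W set0 W f0 G0 hW.
rewrite cards0 add0n in hc.
case: (boolP [exists y, n <= #|[set x in P' | f' x == y]|]) => [/existsP [y hy]|/existsPn hall].
  have [H HQ Hc] := sub_card hy.
  have HP : H \subset P' by apply: subset_trans HQ _; apply/subsetP => x; rewrite inE => /andP [].
  exists H; first exact: subset_trans HP G3.
  split => //.
  suff key : forall B : {set 'I_M}, B \subset H -> #|B| = r.+1 -> col B = y.
    by move=> A B AH BH Ac Bc; rewrite (key A) // (key B).
  move=> B BH Bc.
  have : (0 < #|B|) by rewrite Bc.
  rewrite card_gt0; case/set0Pn => x0 x0B.
  pose p := [arg min_(i < x0 in B) val i].
  have [pB pmin] : p \in B /\ forall z, z \in B -> p <= z.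
    by rewrite /p; case: arg_minnP => // i iH im; split => // z /im.
  have pQ : p \in [set x in P' | f' x == y] by apply: (subsetP HQ); apply: (subsetP BH).
  move: (pQ); rewrite inE => /andP [pP /eqP <-].
  rewrite -(setD1K pB); apply: G2 => //.
  - apply: subset_trans (subD1set _ _) _; apply: subset_trans BH _.
    by apply: subset_trans HP (subsetUl _ _).
  - by move: Bc; rewrite (cardsD1 p B) pB add1n => -[].
  - move=> a; rewrite !inE => /andP [ap aB].
    by rewrite ltn_neqAle pmin // andbT; apply: contra ap => /eqP/val_inj ->.
exfalso.
have : #|P'| <= c * n.
  rewrite -sum1_card (partition_big f' predT) //=.
  apply: leq_trans (_ : \sum_(y : C) n <= _).
    apply: leq_sum => y _; rewrite sum1dep_card.
    have := hall y; rewrite -ltnNge => h; apply: ltnW.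
    exact: h.
  by rewrite big_const iter_addn_0 mulnC leq_mul2r cC orbT.
by move=> h; move: hc; rewrite ltnNge h.
Qed.
Lemma card_setT' (T : finType) : #|{set T}| = 2 ^ #|T|.
Proof.
rewrite -cardsT -(card_powerset [set: T]); apply: eq_card => A.
by rewrite powersetE subsetT inE.
Qed.

Lemma sorted_cat_ltn (s1 s2 : seq nat) : sorted ltn s1 -> sorted ltn s2 ->
  (forall x y, x \in s1 -> y \in s2 -> x < y) -> sorted ltn (s1 ++ s2).
Proof.
rewrite !(sorted_pairwise ltn_trans) pairwise_cat => h1 h2 h.
by rewrite h1 h2 !andbT; apply/allrelP => x y; apply: h.
Qed.

Section Seqs.
Variables (N : nat) (f : 'I_N -> nat).
Hypothesis finj : injective f.

Definition sN := sort leq [seq f i | i <- enum 'I_N].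
Lemma sN_size : size sN = N.
Proof. by rewrite size_sort size_map size_enum_ord. Qed.
Lemma sN_sorted : sorted ltn sN.
Proof.
rewrite ltn_sorted_uniq_leq sort_uniq map_inj_uniq // enum_uniq /=.
exact: (sort_sorted leq_total).
Qed.
Definition gN (i : 'I_N) := nth 0 sN i.
Lemma gN_mono (i j : 'I_N) : i < j -> gN i < gN j.
Proof.
move=> ij; apply: (sorted_ltn_nth ltn_trans 0 sN_sorted) => //; rewrite inE sN_size //.
Qed.
Lemma gN_inj : injective gN.
Proof.
move=> i j e; apply/val_inj; case: (ltngtP i j) => // h; have := gN_mono h; rewrite e ltnn //.
Qed.
Lemma gN_f i : exists j, gN i = f j.
Proof.
have : gN i \in sN by apply: mem_nth; rewrite sN_size.
by rewrite mem_sort => /mapP [j _ ->]; exists j.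
Qed.

Definition ts (S : {set 'I_N}) := sort leq [seq gN i | i <- enum S].
Lemma ts_size S : size (ts S) = #|S|.
Proof. by rewrite size_sort size_map cardE. Qed.
Lemma ts_sorted S : sorted ltn (ts S).
Proof.
rewrite ltn_sorted_uniq_leq sort_uniq map_inj_uniq ?enum_uniq /=; last exact: gN_inj.
exact: (sort_sorted leq_total).
Qed.
Lemma ts_mem S x : (x \in ts S) = [exists i in S, x == gN i].
Proof.
rewrite mem_sort; apply/mapP/existsP => [[i iS ->]|[i /andP [iS /eqP ->]]].
  by exists i; rewrite -mem_enum iS eqxx.
by exists i; rewrite ?mem_enum.
Qed.
End Seqs.

Lemma reduce N (f : 'I_N -> nat) (finj : injective f) (H1 H2 : {set 'I_N}) n
  (c2 : #|H2| = n) (lt12 : forall x y, x \in H1 -> y \in H2 -> x < y)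
  k (J' : k.-tuple nat) (hk : k <= n) (sJ : sorted ltn J')
  (inJ : forall i, tnth J' i \in ts f H1) :
  exists S1 : {set 'I_N}, [/\ S1 \subset H1 :|: H2, #|S1| = n &
     forall i : 'I_k, nth 0 (ts f S1) i = tnth J' i].
Proof.
have c2' : #|H2| = (n - k) + k by rewrite subnK.
have [T [_ [Tsub _ Tc _ _]]] := split_ord c2'.
pose A' := [set i in H1 | gN f i \in J'].
have inJ1 : forall x, x \in J' -> exists2 i, i \in H1 & x = gN f i.
  move=> x /tnthP [i ->]; have := inJ i; rewrite ts_mem => /existsP [j /andP [jH /eqP e]].
  by exists j.
have hA : [seq gN f i | i <- enum A'] =i J'.
  move=> x; apply/mapP/idP => [[i]|xJ].
    by rewrite mem_enum inE => /andP [_ h] ->.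
  have [i iH e] := inJ1 x xJ; exists i => //; by rewrite mem_enum inE iH -e xJ.
have uJ : uniq J' by apply: sorted_uniq sJ; [exact: ltn_trans | exact: ltnn].
have cA : #|A'| = k.
  rewrite cardE -(size_map (gN f)) (perm_size (uniq_perm _ uJ hA)) ?size_tuple //.
  by rewrite map_inj_uniq ?enum_uniq //; exact: gN_inj.
have AH1 : A' \subset H1 by apply/subsetP => i; rewrite inE => /andP [].
have lt : forall x y, x \in A' -> y \in T -> x < y.
  by move=> x y xA yT; apply: lt12; [apply: (subsetP AH1) | apply: (subsetP Tsub)].
have dis : A' :&: T = set0.
  apply/setP => x; rewrite in_setI in_set0; apply/negP => /andP [xA xT].
  by have := lt x x xA xT; rewrite ltnn.
exists (A' :|: T); split.
- by apply: setUSS.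
- by rewrite cardsU dis cards0 subn0 cA Tc subnKC.
have e : ts f (A' :|: T) = J' ++ ts f T.
  apply: (irr_sorted_eq ltn_trans ltnn); first exact: ts_sorted.
    apply: sorted_cat_ltn => //; first exact: ts_sorted.
    move=> x y xJ; rewrite ts_mem => /existsP [j /andP [jT /eqP ->]].
    have [i iH ->] := inJ1 x xJ; exact: (gN_mono finj (lt12 _ _ iH (subsetP Tsub _ jT))).
  move=> x; rewrite mem_cat !ts_mem; apply/existsP/orP => [[i]|[xJ|/existsP [j /andP [jT e]]]].
    rewrite inE => /andP [/orP [iA|iT] /eqP ->].
      by left; rewrite -hA; apply: map_f; rewrite mem_enum.
    by right; apply/existsP; exists i; rewrite iT eqxx.
  move: xJ; rewrite -hA => /mapP [i]; rewrite mem_enum => iA ->.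
    by exists i; rewrite inE iA eqxx.
  by exists j; rewrite inE jT orbT.
move=> i; rewrite e nth_cat size_tuple ltn_ord (tnth_nth 0) //.
Qed.

Lemma widenU_proof d k n (hk : k <= n) (U : dsub d k) :
  #|[set widen_ord hk i | i in val U]| == d.
Proof.
rewrite card_imset; first exact: (valP U).
by move=> a b /(congr1 val) /= /val_inj.
Qed.
Definition widenU d k n (hk : k <= n) (U : dsub d k) : dsub d n :=
  exist (fun S : {set 'I_n} => #|S| == d) _ (widenU_proof hk U).
Definition restr d k n (hk : k <= n) (Xty : finType) (p : {ffun dsub d n -> Xty}) :
  {ffun dsub d k -> Xty} := [ffun U => p (widenU hk U)].
Definition ext d k n (hk : k <= n) (Xty : finType) (A' : {set {ffun dsub d k -> Xty}}) :
  {set {ffun dsub d n -> Xty}} := [set p | restr hk p \in A'].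

From mathcomp Require Import all_boot all_order all_algebra finmap.
From mathcomp Require Import all_classical all_reals all_analysis.
From mathcomp Require Import lra.
Import Order.TTheory GRing.Theory Num.Theory.

Local Open Scope ring_scope.
Local Open Scope classical_set_scope.
Lemma img_card k (J : k.-tuple nat) (U : {set 'I_k}) : uniq J -> #|` img J U|%fset = #|U|.
Proof.
move=> uJ; rewrite /img card_imfset; last by apply/tuple_uniqP.
rewrite cardE; apply/perm_size/uniq_perm; rewrite ?enum_finmem_uniq ?enum_uniq //.
Qed.

Lemma patt_meas (R : realType) (dT : measure_display) (T : measurableType dT)
  (P : probability T R) (Xty : finType) (X : {fset nat} -> T -> Xty) (d : nat) (I : set nat)
  (Xm : forall s : {fset nat}, (forall x, x \in s -> I x) -> #|` s|%fset = d ->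
         forall x : Xty, measurable (X s @^-1` [set x]))
  k (J : k.-tuple nat) (uJ : uniq J) (IJ : forall i, I (tnth J i))
  (A : {set {ffun dsub d k -> Xty}}) :
  measurable [set t | patt X d J t \in A].
Proof.
have -> : [set t | patt X d J t \in A] = \bigcup_(p in [set p | p \in A])
    \bigcap_(U in [set: dsub d k]) (X (img J (val U)) @^-1` [set p U]).
  apply/seteqP; split => t /=.
    by move=> tA; exists (patt X d J t) => //= U _; rewrite /patt ffunE.
  move=> [p pA Hp]; have -> // : patt X d J t = p.
  by apply/ffunP => U; rewrite ffunE; exact: (Hp U Logic.I).
apply: fin_bigcup_measurable; first exact: finite_finset.
move=> p _; apply: fin_bigcap_measurable; first exact: finite_finset.
move=> U _; apply: Xm.
- by move=> x /imfsetP [i /= iU ->]; exact: IJ.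
- by rewrite img_card //; apply/eqP; exact: (valP U).
Qed.

Lemma law_ev01 (R : realType) (dT : measure_display) (T : measurableType dT)
  (P : probability T R) (Xty : finType) (X : {fset nat} -> T -> Xty) (d : nat) (I : set nat)
  (Xm : forall s : {fset nat}, (forall x, x \in s -> I x) -> #|` s|%fset = d ->
         forall x : Xty, measurable (X s @^-1` [set x]))
  k (J : k.-tuple nat) (uJ : uniq J) (IJ : forall i, I (tnth J i))
  (A : {set {ffun dsub d k -> Xty}}) :
  0 <= law_ev P X J A <= 1.
Proof.
have hm := patt_meas P Xm uJ IJ A.
have h0 : (0 <= P [set t | patt X d J t \in A])%E := measure_ge0 _ _.
have h1 := probability_le1 P hm.
rewrite /law_ev; move: h0 h1; set v := P _; case: v => [x||] //=.
by rewrite !lee_fin => -> ->.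
Qed.
Lemma trunc_close (R : realType) (eta v1 v2 : R) (L : nat) : 0 < eta ->
  0 <= v1 <= 1 -> 0 <= v2 <= 1 -> L = Num.trunc (eta^-1) ->
  (inord (Num.trunc (v1/eta)) : 'I_L.+1) = inord (Num.trunc (v2/eta)) ->
  `|v1 - v2| <= eta.
Proof.
move=> e0 /andP [a0 a1] /andP [b0 b1] -> h.
have le1 : forall v : R, 0 <= v <= 1 -> (Num.trunc (v / eta) < (Num.trunc eta^-1).+1)%N.
  move=> v /andP [v0 vle]; rewrite ltnS; apply: le_truncn.
  by rewrite -[X in _ <= X]mul1r ler_pM2r ?invr_gt0.
have := congr1 val h; rewrite /= !inordK ?le1 ?a0 ?a1 ?b0 ?b1 // => ht.
have ha : 0 <= v1 / eta by rewrite divr_ge0 // ltW.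
have hb : 0 <= v2 / eta by rewrite divr_ge0 // ltW.
have /andP [ia1 ia2] := truncn_itv ha.
have /andP [ib1 ib2] := truncn_itv hb.
rewrite ht in ia1 ia2.
have e1 : v1 = (v1/eta) * eta by rewrite divfK // gt_eqF.
have e2 : v2 = (v2/eta) * eta by rewrite divfK // gt_eqF.
rewrite e1 e2 -mulrBl normrM (gtr0_norm e0) -[X in _ <= X]mul1r ler_pM2r //.
move: ia1 ia2 ib1 ib2; set a := v1 / eta; set b := v2 / eta; set t := (Num.trunc b)%:R.
rewrite -natr1 -/t => ia1 ia2 ib1 ib2.
rewrite ler_norml; apply/andP; split; lra.
Qed.

Lemma law_restrict (R : realType) (dT : measure_display) (T : measurableType dT)
  (P : probability T R) (Xty : finType) (X : {fset nat} -> T -> Xty) (d : nat)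
  k n (hk : (k <= n)%N) (J' : k.-tuple nat) (S : n.-tuple nat)
  (h : forall i : 'I_k, tnth S (widen_ord hk i) = tnth J' i)
  (A' : {set {ffun dsub d k -> Xty}}) :
  law_ev P X J' A' = law_ev P X S (ext hk A').
Proof.
suff E : forall t, patt X d J' t = restr hk (patt X d S t).
  by rewrite /law_ev; congr (fine (P _)); apply/funext => t /=; rewrite inE E.
move=> t; apply/ffunP => U; rewrite !ffunE /=; congr (X _ t).
apply/fsetP => x; apply/imfsetP/imfsetP => [[i iU ->]|[i]] /=.
  by exists (widen_ord hk i); [apply: imset_f | rewrite h].
by case/imsetP => j jU -> ->; exists j => //; rewrite h.
Qed.

Unset Implicit Arguments.

Theorem proposition1p3 (m n d : nat) :
  (0 < m)%N -> (0 < n)%N -> (0 < d)%N -> (d <= n)%N ->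
  forall (R : realType) (eta : R), 0 < eta ->
  exists N : nat, (n <= N)%N /\
    forall (Xty : finType), #|Xty| = m ->
    forall (dT : measure_display) (T : measurableType dT) (P : probability T R)
           (I : set nat),
      (exists f : 'I_N -> nat, injective f /\ forall i, I (f i)) ->
    forall X : {fset nat} -> T -> Xty,
      (forall s : {fset nat}, (forall x, x \in s -> I x) -> #|` s|%fset = d ->
         forall x : Xty, measurable (X s @^-1` [set x])) ->
    exists J : n.-tuple nat,
      sorted ltn J /\ (forall i, I (tnth J i)) /\
      spreadable P X d eta [set x | x \in J].
Proof.
move=> m0 n0 d0 dn R eta eta0.
pose L := Num.trunc (eta^-1).
pose c := (L.+1 ^ (2 ^ (m ^ #|{: dsub d n}|)))%N.
have [N0 HN0] := ramsey n c (n + n).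
exists (N0 + n)%N; split; first by rewrite leq_addl.
move=> Xty cX dT T P I [f [finj fI]] X Xm.
pose tup (S : {set 'I_(N0 + n)}) : n.-tuple nat := insubd (nseq_tuple n 0) (ts f S).
have tupE : forall S : {set 'I_(N0 + n)}, #|S| = n -> val (tup S) = ts f S.
  by move=> S hS; rewrite /tup insubdK // unfold_in /= ts_size hS.
have tupU : forall S : {set 'I_(N0 + n)}, #|S| = n -> uniq (tup S).
  move=> S hS; rewrite tupE //; apply: sorted_uniq (ts_sorted finj S).
    exact: ltn_trans.
  exact: ltnn.
have tupI : forall (S : {set 'I_(N0 + n)}) i, #|S| = n -> I (tnth (tup S) i).
  move=> S i hS; have : tnth (tup S) i \in ts f S by rewrite -tupE // mem_tnth.
  rewrite ts_mem => /existsP [j /andP [_ /eqP ->]]; have [j' ->] := gN_f f j.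
  exact: fI.
pose col (S : {set 'I_(N0 + n)}) : {ffun {set {ffun dsub d n -> Xty}} -> 'I_L.+1} :=
  [ffun A => inord (Num.trunc (law_ev P X (tup S) A / eta))].
have cC : (#|{ffun {set {ffun dsub d n -> Xty}} -> 'I_L.+1}| <= c)%N.
  by rewrite card_ffun card_ord card_setT' card_ffun cX.
have hW : (N0 <= #|[set: 'I_(N0 + n)]%SET|)%N by rewrite cardsT card_ord leq_addr.
have [H _ [Hc Hh]] := HN0 _ _ cC col _ hW.
have [H1 [H2 [s1 s2 c1 c2 lt12]]] := split_ord Hc.
exists (tup H1); split; [|split].
- rewrite tupE //; exact: ts_sorted.
- by move=> i; apply: tupI.
move=> k dk J' K' sJ sK inJ inK.
have inJ' : forall i, tnth J' i \in ts f H1 by move=> i; rewrite -tupE //; exact: inJ.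
have inK' : forall i, tnth K' i \in ts f H1 by move=> i; rewrite -tupE //; exact: inK.
have hk : (k <= n)%N.
  rewrite -(size_tuple J') -c1 -(ts_size f H1); apply: uniq_leq_size.
    by apply: sorted_uniq sJ; [exact: ltn_trans|exact: ltnn].
  by move=> x /tnthP [i ->]; exact: inJ' i.
have [S1 [S1H S1c S1e]] := reduce finj c2 lt12 hk sJ inJ'.
have [S2 [S2H S2c S2e]] := reduce finj c2 lt12 hk sK inK'.
have h1 : forall i : 'I_k, tnth (tup S1) (widen_ord hk i) = tnth J' i.
  by move=> i; rewrite (tnth_nth 0) tupE // S1e.
have h2 : forall i : 'I_k, tnth (tup S2) (widen_ord hk i) = tnth K' i.
  by move=> i; rewrite (tnth_nth 0) tupE // S2e.
have HH : (H1 :|: H2 \subset H)%SET by rewrite finset.subUset s1 s2.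
rewrite /dTV; apply: bigmax_le; first exact: ltW.
move=> A' _.
rewrite (law_restrict P X h1) (law_restrict P X h2).
apply: (trunc_close (L:=L)) => //.
- by apply: (law_ev01 P Xm); [apply: tupU | move=> i; apply: tupI].
- by apply: (law_ev01 P Xm); [apply: tupU | move=> i; apply: tupI].
have := Hh S1 S2 (fintype.subset_trans S1H HH) (fintype.subset_trans S2H HH) S1c S2c.
by move=> e; move: (congr1 (fun F : {ffun {set {ffun dsub d n -> Xty}} -> 'I_L.+1} => F (ext hk A')) e); rewrite /col !ffunE.
Qed.
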